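(* For all $q,p\in\mathbb{C}^\times$ and $n\ge1$, the operator $R=R_n(q,p)$ satisfies the Yang–Baxter equation $R_{12}R_{13}R_{23}=R_{23}R_{13}R_{12}$, and the operator $\check R=pRP$ satisfies the Hecke equation $(\check R-q)(\check R+q^{-1})=0$.
   Context: $V=\mathbb{C}^n$ with basis $e_1,\dots,e_n$; $P$ is the flip on $V\otimes V$; operators are written $R(e_i\otimes e_j)=\sum_{k,l}R_{ij}^{kl}e_k\otimes e_l$. For $q,p\in\mathbb{C}^\times$, the two-parameter Cremmer–Gervais matrix $R=R_n(q,p)$ has entries (for $1\le i,j,k,l\le n$): $pR_{ij}^{kl}=qp^{2(l-i)}$ if $i=k\ge j=l$; $pR_{ij}^{kl}=q^{-1}p^{2(l-i)}$ if $i=k<j=l$; $pR_{ij}^{kl}=(q-q^{-1})p^{2(l-i)}$ if $j\le k<i$ and $i+j=k+l$; $pR_{ij}^{kl}=(q^{-1}-q)p^{2(l-i)}$ if $i<k<j$ and $i+j=k+l$; and $R_{ij}^{kl}=0$ otherwise. (For $q=p^n$ this is the $R$-matrix of Cremmer and Gervais.) *)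

(* Defs.v *)
From HB Require Import structures.
From mathcomp Require Import all_boot all_order all_algebra.
From mathcomp Require Import complex.
From mathcomp Require Import Rstruct.
Set Implicit Arguments. Unset Strict Implicit. Unset Printing Implicit Defensive.
Import Order.TTheory GRing.Theory Num.Theory.
Local Open Scope ring_scope.

Definition CC : Type := (Rdefinitions.R)[i].

(* Operators on V (x) V, V = C^n, given by their coefficients:
   A i j k l = A_{ij}^{kl}, i.e. A (e_i (x) e_j) = sum_{k,l} A_{ij}^{kl} e_k (x) e_l.
   Indices 1..n of the paper are 'I_n (0..n-1); all conditions below are
   invariant under the common shift. *)
Definition op2 (n : nat) := 'I_n -> 'I_n -> 'I_n -> 'I_n -> CC.
(* Operators on V (x) V (x) V: T a b c a' b' c' = coefficient of
   e_a' (x) e_b' (x) e_c' in T (e_a (x) e_b (x) e_c). *)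
Definition op3 (n : nat) :=
  'I_n -> 'I_n -> 'I_n -> 'I_n -> 'I_n -> 'I_n -> CC.

Definition comp2 n (A B : op2 n) : op2 n :=
  fun i j k l => \sum_(a < n) \sum_(b < n) B i j a b * A a b k l.
Definition comp3 n (A B : op3 n) : op3 n :=
  fun a b c a' b' c' =>
    \sum_(x < n) \sum_(y < n) \sum_(z < n) B a b c x y z * A x y z a' b' c'.

Definition id2 n : op2 n := fun i j k l => ((i == k) && (j == l))%:R.
Definition flip n : op2 n := fun i j k l => ((k == j) && (l == i))%:R.
Definition add2 n (A B : op2 n) : op2 n := fun i j k l => A i j k l + B i j k l.
Definition scale2 n (c : CC) (A : op2 n) : op2 n := fun i j k l => c * A i j k l.

Definition leg12 n (R : op2 n) : op3 n :=
  fun a b c a' b' c' => R a b a' b' * (c == c')%:R.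
Definition leg13 n (R : op2 n) : op3 n :=
  fun a b c a' b' c' => R a c a' c' * (b == b')%:R.
Definition leg23 n (R : op2 n) : op3 n :=
  fun a b c a' b' c' => R b c b' c' * (a == a')%:R.

Definition CG_R n (q p : CC) : op2 n := fun i j k l =>
  p^-1 * (p ^ (2 * ((l : nat)%:Z - (i : nat)%:Z)) *
    (if (i == k) && (j == l) then (if (j <= i)%N then q else q^-1)
     else if (i + j == k + l)%N then
       (if (j <= k)%N && (k < i)%N then q - q^-1
        else if (i < k)%N && (k < j)%N then q^-1 - q else 0)
     else 0)).

Definition CG_Rcheck n (q p : CC) : op2 n :=
  scale2 p (comp2 (CG_R q p) (@flip n)).

(* Main.v *)
Require Import Defs.
From mathcomp Require Import all_boot all_order all_algebra.
From mathcomp Require Import complex Rstruct ring zify.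
Import GRing.Theory Num.Theory.
Set Implicit Arguments. Unset Strict Implicit. Unset Printing Implicit Defensive.
Local Open Scope ring_scope.

Lemma sum_ind (n a b : nat) (f : nat -> CC) : (a <= b <= n)%N ->
  \sum_(k < n) ((a <= k < b)%N)%:R * f k = \sum_(a <= k < b) f k.
Proof.
move=> /andP [hab hbn].
rewrite -(big_mkord xpredT (fun k => ((a <= k < b)%N)%:R * f k)).
rewrite (big_cat_nat (n:=a)) //=; last by lia.
rewrite (big_cat_nat (m:=a) (n:=b)) //=.
rewrite big1_seq ?add0r; last first.
  move=> k /andP [_]; rewrite mem_index_iota => hk.
  have -> : (a <= k < b)%N = false by lia.
  by rewrite mul0r.
rewrite [X in _ + X]big1_seq ?addr0; last first.
  move=> k /andP [_]; rewrite mem_index_iota => hk.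
  have -> : (a <= k < b)%N = false by lia.
  by rewrite mul0r.
apply: eq_big_nat => k hk; have -> : (a <= k < b)%N = true by lia.
by rewrite mul1r.
Qed.

Lemma sum_ind0 (n a b : nat) (f : nat -> CC) : (b <= a)%N ->
  \sum_(k < n) ((a <= k < b)%N)%:R * f k = 0.
Proof.
move=> h; apply: big1 => k _.
have -> : (a <= k < b)%N = false by lia.
by rewrite mul0r.
Qed.

Lemma tele (X Y : CC) (s a b : nat) : (a <= b <= s.+1)%N ->
  (X - Y) * \sum_(a <= k < b) X ^+ k * Y ^+ (s - k) =
  X ^+ b * Y ^+ (s.+1 - b) - X ^+ a * Y ^+ (s.+1 - a).
Proof.
move=> /andP [hab hbs].
rewrite mulr_sumr.
apply: (telescope_sumr_eq (fun k => X ^+ k * Y ^+ (s.+1 - k))) => // k hk.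
have -> : (s.+1 - k = (s - k).+1)%N by lia.
have -> : (s.+1 - k.+1 = (s - k))%N by lia.
rewrite !exprS; ring.
Qed.

Definition cnd n (q : CC) (i j k l : 'I_n) : CC :=
    (if (i == k) && (j == l) then (if (j <= i)%N then q else q^-1)
     else if (i + j == k + l)%N then
       (if (j <= k)%N && (k < i)%N then q - q^-1
        else if (i < k)%N && (k < j)%N then q^-1 - q else 0)
     else 0).

Ltac bcase := repeat match goal with
 | |- context [ if ?b then _ else _ ] => let E := fresh "E" in destruct b eqn:E
 | |- context [ nat_of_bool ?b ] => let E := fresh "E" in destruct b eqn:E
 end.

Lemma cnd_eq n (q : CC) (i j k l : 'I_n) :
  cnd q i j k l = ((k + l == i + j)%N)%:R * (((k : nat) == i)%:R * q +
     (q - q^-1) * (((j <= k < i)%N)%:R - ((i <= k < j)%N)%:R)).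
Proof.
rewrite /cnd -[i == k]/((i:nat) == k) -[j == l]/((j:nat) == l).
case: (eqVneq (k + l)%N (i + j)%N) => hs; last first.
  have -> : (((i:nat) == k) && ((j:nat) == l)) = false by lia.
  by rewrite mul0r.
rewrite mul1r.
case: (eqVneq (k:nat) i) => hk.
  have -> : ((j:nat) == l) = true by lia.
  have -> : ((j <= k < i)%N) = false by lia.
  case: (leqP j i) => hji.
    have -> : ((i <= k < j)%N) = false by lia.
    rewrite /=; ring.
  have -> : ((i <= k < j)%N) = true by lia.
  rewrite /=; ring.
rewrite /=.
case: (boolP (j <= k < i)%N) => h1.
  have -> : ((i <= k < j)%N) = false by lia.
  rewrite /=; ring.
have -> : ((i <= k < j)%N) = (i < k < j)%N by lia.
case: (boolP (i < k < j)%N) => h2; rewrite /=; ring.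
Qed.

Definition ek (q : CC) (i j k : nat) : CC := ((k == i)%:R * q +
     (q - q^-1) * (((j <= k < i)%N)%:R - ((i <= k < j)%N)%:R)).

Lemma sum_l n (q X Y : CC) (i j k : 'I_n) :
  \sum_(l < n) cnd q i j k l * X ^+ k * Y ^+ l =
  ek q i j k * X ^+ k * Y ^+ (i + j - k).
Proof.
have hi := ltn_ord i; have hj := ltn_ord j; have hk := ltn_ord k.
under eq_bigr do rewrite cnd_eq.
case: (boolP ((k <= i + j)%N && (i + j - k < n)%N)) => hc.
  have hl : (i + j - k < n)%N by lia.
  rewrite (bigD1 (Ordinal hl)) //= big1 ?addr0.
    have -> : (k + (i + j - k) == i + j)%N = true by lia.
    by rewrite mul1r.
  move=> l; rewrite -(inj_eq val_inj) /= => hne.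
  have -> : (k + l == i + j)%N = false by lia.
  by rewrite !mul0r.
have -> : ek q i j k = 0.
  rewrite /ek.
  have -> : ((k:nat) == i) = false by lia.
  have -> : ((j <= k < i)%N) = false by lia.
  have -> : ((i <= k < j)%N) = false by lia.
  by rewrite /= mul0r subr0 mulr0 addr0.
rewrite !mul0r; apply: big1 => l _.
case: l => l hl /=.
have -> : (k + l == i + j)%N = false by lia.
by rewrite !mul0r.
Qed.

Lemma sum_delta n (g : nat -> CC) (i : 'I_n) :
  \sum_(k < n) ((k : nat) == i)%:R * g k = g i.
Proof.
rewrite (bigD1 i) //= eqxx mul1r big1 ?addr0 // => k hk.
by rewrite (inj_eq val_inj) (negbTE hk) mul0r.
Qed.

Lemma core n (q X Y : CC) (i j : 'I_n) :
  (X - Y) * (\sum_(k < n) \sum_(l < n) cnd q i j k l * X ^+ k * Y ^+ l) =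
  q * (X - Y) * X ^+ i * Y ^+ j + (q - q^-1) * Y * (X ^+ i * Y ^+ j - X ^+ j * Y ^+ i).
Proof.
under eq_bigr do rewrite sum_l.
set g := fun k : nat => X ^+ k * Y ^+ (i + j - k).
have -> : \sum_(k < n) ek q i j k * X ^+ k * Y ^+ (i + j - k) =
   \sum_(k < n) ((k : nat) == i)%:R * (q * g k) + (q - q^-1) *
   (\sum_(k < n) ((j <= k < i)%N)%:R * g k - \sum_(k < n) ((i <= k < j)%N)%:R * g k).
  rewrite -sumrB mulr_sumr -big_split; apply: eq_bigr => k _; rewrite /ek /g /=; ring.
rewrite (sum_delta (fun k => q * g k)) /g.
have hi := ltn_ord i; have hj := ltn_ord j.
have -> : (i + j - i = j)%N by lia.
case: (leqP j i) => hji.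
  rewrite (@sum_ind n j i (fun k => X ^+ k * Y ^+ (i + j - k))); last by lia.
  rewrite (@sum_ind0 n i j (fun k => X ^+ k * Y ^+ (i + j - k))) // subr0.
  rewrite mulrDr [(X - Y) * ((q - q^-1) * _)]mulrCA tele; last by lia.
  have -> : ((i + j).+1 - i = j.+1)%N by lia.
  have -> : ((i + j).+1 - j = i.+1)%N by lia.
  rewrite !exprS; ring.
rewrite (@sum_ind n i j (fun k => X ^+ k * Y ^+ (i + j - k))); last by lia.
rewrite (@sum_ind0 n j i (fun k => X ^+ k * Y ^+ (i + j - k))); last by lia.
rewrite sub0r mulrN mulrDr [(X - Y) * - _]mulrN [(X - Y) * ((q - q^-1) * _)]mulrCA tele; last by lia.
have -> : ((i + j).+1 - i = j.+1)%N by lia.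
have -> : ((i + j).+1 - j = i.+1)%N by lia.
rewrite !exprS; ring.
Qed.

Lemma powE (p : CC) (i l : nat) : p != 0 ->
  p ^ (2 * (l%:Z - i%:Z)) = (p ^+ 2) ^+ l / (p ^+ 2) ^+ i.
Proof.
move=> hp.
have -> : (2 * (l%:Z - i%:Z) = (2 * l)%N%:Z - (2 * i)%N%:Z)%R by rewrite mulrBr !PoszM.
rewrite expfzDr // -exprnN -!exprM.
by [].
Qed.

Lemma CGR_E n (q p : CC) (i j k l : 'I_n) : p != 0 ->
  CG_R q p i j k l = p^-1 / (p ^+ 2) ^+ i * (cnd q i j k l * (p ^+ 2) ^+ l).
Proof.
move=> hp; rewrite /CG_R powE // -/(cnd q i j k l).
move: (cnd q i j k l) ((p ^+ 2) ^+ l) ((p ^+ 2) ^+ i) => c A B; ring.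
Qed.

Lemma rho_eq n (q p x y : CC) (i j : 'I_n) : q != 0 -> p != 0 ->
  (x / p ^+ 2 - y) * (\sum_(k < n) \sum_(l < n) CG_R q p i j k l * x ^+ k * y ^+ l) =
  p^-1 * (q * (x / p ^+ 2 - y) * (x / p ^+ 2) ^+ i * (p ^+ 2 * y) ^+ j +
     (q - q^-1) * y * ((x / p ^+ 2) ^+ i * (p ^+ 2 * y) ^+ j - y ^+ i * x ^+ j)).
Proof.
move=> hq hp.
have -> : \sum_(k < n) \sum_(l < n) CG_R q p i j k l * x ^+ k * y ^+ l =
   \sum_(k < n) \sum_(l < n) p^-1 / (p ^+ 2) ^+ i * (cnd q i j k l * (p ^+ 2) ^+ l) * x ^+ k * y ^+ l.
  by apply: eq_bigr => k _; apply: eq_bigr => l _; rewrite CGR_E.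
have : p ^+ 2 != 0 by rewrite expf_neq0.
move: (p ^+ 2) => P hP.
have -> : \sum_(k < n) \sum_(l < n) p^-1 / P ^+ i * (cnd q i j k l * P ^+ l) * x ^+ k * y ^+ l =
   p^-1 / P ^+ i * \sum_(k < n) \sum_(l < n) cnd q i j k l * x ^+ k * (P * y) ^+ l.
  rewrite mulr_sumr; apply: eq_bigr => k _; rewrite mulr_sumr; apply: eq_bigr => l _.
  rewrite exprMn; move: (cnd q i j k l) => c; ring.
have -> : x / P - y = (x - P * y) / P by field.
rewrite -[_ * (_ * \sum_(k < n) _)]/(_ * (_ * (\sum_(k < n) \sum_(l < n) cnd q i j k l * x ^+ k * (P * y) ^+ l))).
move: (core q x (P * y) i j).
move: (\sum_(k < n) \sum_(l < n) cnd q i j k l * x ^+ k * (P * y) ^+ l) => S hS.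
have -> : (x - P * y) / P * (p^-1 / P ^+ i * S) = p^-1 / P ^+ i / P * ((x - P * y) * S) by ring.
rewrite hS.
rewrite !exprMn ?expr_div_n.
have hPi : P ^+ i != 0 by rewrite expf_neq0.
have hPj : P ^+ j != 0 by rewrite expf_neq0.
rewrite exprVn; field.
by rewrite hp hP hPi hq.
Qed.

Definition vec3 n := 'I_n -> 'I_n -> 'I_n -> CC.
Definition F3 n (w : vec3 n) (x y z : CC) : CC :=
  \sum_(a < n) \sum_(b < n) \sum_(c < n) w a b c * x ^+ a * y ^+ b * z ^+ c.
Definition app3 n (T : op3 n) (w : vec3 n) : vec3 n := fun a' b' c' =>
  \sum_(a < n) \sum_(b < n) \sum_(c < n) w a b c * T a b c a' b' c'.

Lemma triple n (f : 'I_n -> 'I_n -> 'I_n -> CC) :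
  \sum_(a < n) \sum_(b < n) \sum_(c < n) f a b c =
  \sum_(t : 'I_n * ('I_n * 'I_n)) f t.1 t.2.1 t.2.2.
Proof.
rewrite (eq_bigr (fun a => \sum_(u : 'I_n * 'I_n) f a u.1 u.2)); last first.
  by move=> a _; rewrite pair_bigA.
by rewrite pair_bigA.
Qed.

Lemma app3_comp n (A B : op3 n) (w : vec3 n) a' b' c' :
  app3 (comp3 A B) w a' b' c' = app3 A (app3 B w) a' b' c'.
Proof.
rewrite /app3 /comp3 !triple.
under eq_bigr do rewrite triple mulr_sumr.
rewrite exchange_big; apply: eq_bigr => t _.
rewrite triple mulr_suml; apply: eq_bigr => u _ /=; ring.
Qed.

Lemma F3_ext n (u v : vec3 n) x y z : (forall a b c, u a b c = v a b c) ->
  F3 u x y z = F3 v x y z.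
Proof.
move=> h; rewrite /F3; apply: eq_bigr => a _; apply: eq_bigr => b _;
  apply: eq_bigr => c _; by rewrite h.
Qed.

Lemma F3_app n (T : op3 n) (w : vec3 n) x y z :
  F3 (app3 T w) x y z = \sum_(a < n) \sum_(b < n) \sum_(c < n) w a b c * F3 (T a b c) x y z.
Proof.
rewrite /F3 /app3 !triple.
under eq_bigr do rewrite triple !mulr_suml.
rewrite exchange_big; apply: eq_bigr => t _.
rewrite triple mulr_sumr; apply: eq_bigr => u _; ring.
Qed.

Lemma collapse n (b : 'I_n) (G : 'I_n -> CC) :
  (forall b', b' != b -> G b' = 0) -> \sum_(b' < n) G b' = G b.
Proof.
by move=> h; rewrite (bigD1 b) //= big1 ?addr0 // => b' /h.
Qed.

Definition rho n (R : op2 n) (i j : 'I_n) (x y : CC) :=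
  \sum_(k < n) \sum_(l < n) R i j k l * x ^+ k * y ^+ l.

Lemma F3_leg12 n (R : op2 n) a b c x y z :
  F3 (leg12 R a b c) x y z = rho R a b x y * z ^+ c.
Proof.
rewrite /F3 /leg12 /rho mulr_suml; apply: eq_bigr => k _.
rewrite mulr_suml; apply: eq_bigr => l _.
rewrite (@collapse n c); first by rewrite eqxx mulr1.
by move=> c' hc; rewrite eq_sym (negbTE hc) mulr0 !mul0r.
Qed.

Lemma F3_leg13 n (R : op2 n) a b c x y z :
  F3 (leg13 R a b c) x y z = rho R a c x z * y ^+ b.
Proof.
rewrite /F3 /leg13 /rho mulr_suml; apply: eq_bigr => k _.
rewrite (@collapse n b).
  rewrite eqxx mulr_suml; apply: eq_bigr => l _ /=; ring.
move=> b' hb; apply: big1 => l _.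
by rewrite eq_sym (negbTE hb) mulr0 !mul0r.
Qed.

Lemma F3_leg23 n (R : op2 n) a b c x y z :
  F3 (leg23 R a b c) x y z = rho R b c y z * x ^+ a.
Proof.
rewrite /F3 /leg23 /rho (@collapse n a).
  rewrite eqxx mulr_suml; apply: eq_bigr => k _.
  rewrite mulr_suml; apply: eq_bigr => l _ /=; ring.
move=> a' ha; apply: big1 => k _; apply: big1 => l _.
by rewrite eq_sym (negbTE ha) mulr0 !mul0r.
Qed.

Lemma rho_solved n (q p x y : CC) (i j : 'I_n) : q != 0 -> p != 0 ->
  x / p ^+ 2 - y != 0 ->
  rho (CG_R q p) i j x y =
  p^-1 * (q * (x / p ^+ 2) ^+ i * (p ^+ 2 * y) ^+ j +
     (q - q^-1) * y / (x / p ^+ 2 - y) * ((x / p ^+ 2) ^+ i * (p ^+ 2 * y) ^+ j - y ^+ i * x ^+ j)).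
Proof.
move=> hq hp hD; apply: (mulfI hD); rewrite /rho rho_eq //.
move: (x / p ^+ 2 - y) hD ((x / p ^+ 2) ^+ i * (p ^+ 2 * y) ^+ j) => D hD A.
rewrite -mulrA; field.
by rewrite hD hq hp.
Qed.

Section Legs.
Variables (n : nat) (q p : CC) (hq : q != 0) (hp : p != 0).
Local Notation P := (p ^+ 2).
Local Notation h := (q - q^-1).
Local Notation R := (CG_R q p).

Lemma L12 (w : vec3 n) x y z : x / P - y != 0 ->
  F3 (app3 (leg12 R) w) x y z =
  p^-1 * (q * F3 w (x / P) (P * y) z + h * y / (x / P - y) * (F3 w (x / P) (P * y) z - F3 w y x z)).
Proof.
move=> hD; rewrite F3_app.
under eq_bigr do under eq_bigr do under eq_bigr do rewrite F3_leg12.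
rewrite /F3 !triple.
rewrite -sumrB !mulr_sumr -big_split mulr_sumr; apply: eq_bigr => t _ /=.
rewrite rho_solved //.
move: (x / P - y) hD => D hD; field.
by rewrite hD hq hp.
Qed.

Lemma L13 (w : vec3 n) x y z : x / P - z != 0 ->
  F3 (app3 (leg13 R) w) x y z =
  p^-1 * (q * F3 w (x / P) y (P * z) + h * z / (x / P - z) * (F3 w (x / P) y (P * z) - F3 w z y x)).
Proof.
move=> hD; rewrite F3_app.
under eq_bigr do under eq_bigr do under eq_bigr do rewrite F3_leg13.
rewrite /F3 !triple.
rewrite -sumrB !mulr_sumr -big_split mulr_sumr; apply: eq_bigr => t _ /=.
rewrite rho_solved //.
move: (x / P - z) hD => D hD; field.
by rewrite hD hq hp.
Qed.

Lemma L23 (w : vec3 n) x y z : y / P - z != 0 ->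
  F3 (app3 (leg23 R) w) x y z =
  p^-1 * (q * F3 w x (y / P) (P * z) + h * z / (y / P - z) * (F3 w x (y / P) (P * z) - F3 w x z y)).
Proof.
move=> hD; rewrite F3_app.
under eq_bigr do under eq_bigr do under eq_bigr do rewrite F3_leg23.
rewrite /F3 !triple.
rewrite -sumrB !mulr_sumr -big_split mulr_sumr; apply: eq_bigr => t _ /=.
rewrite rho_solved //.
move: (y / P - z) hD => D hD; field.
by rewrite hD hq hp.
Qed.
End Legs.

Lemma nzl (u v k : CC) : u != v -> k != 0 -> (u - v) * k != 0.
Proof. by move=> h hk; rewrite mulf_neq0 // subr_eq0. Qed.

Lemma YBE_F n (q p : CC) (w : vec3 n) x y z : q != 0 -> p != 0 ->
  x != p ^+ 2 * y -> x != p ^+ 2 * (p ^+ 2 * z) -> y != p ^+ 2 * z ->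
  F3 (app3 (comp3 (leg12 (CG_R q p)) (comp3 (leg13 (CG_R q p)) (leg23 (CG_R q p)))) w) x y z =
  F3 (app3 (comp3 (leg23 (CG_R q p)) (comp3 (leg13 (CG_R q p)) (leg12 (CG_R q p)))) w) x y z.
Proof.
move=> hq hp h1 h2 h3.
have hP : p ^+ 2 != 0 by rewrite expf_neq0.
rewrite (@F3_ext _ _ (app3 (leg12 (CG_R q p)) (app3 (leg13 (CG_R q p)) (app3 (leg23 (CG_R q p)) w)))); last first.
  by move=> a b c; rewrite app3_comp; apply: eq_bigr => a0 _; apply: eq_bigr => b0 _; apply: eq_bigr => c0 _; rewrite app3_comp.
rewrite [RHS](@F3_ext _ _ (app3 (leg23 (CG_R q p)) (app3 (leg13 (CG_R q p)) (app3 (leg12 (CG_R q p)) w)))); last first.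
  by move=> a b c; rewrite app3_comp; apply: eq_bigr => a0 _; apply: eq_bigr => b0 _; apply: eq_bigr => c0 _; rewrite app3_comp.
set P := p ^+ 2.
have hPi : P^-1 != 0 by rewrite invr_eq0.
have hPm : - P^-1 != 0 by rewrite oppr_eq0 invr_eq0.
have hPPi : (P * P)^-1 != 0 by rewrite invr_eq0 mulf_neq0.
have d1 : x / P - y != 0.
  have -> : x / P - y = (x - P * y) * P^-1 by field. exact: nzl.
have d2 : x / P / P - z != 0.
  have -> : x / P / P - z = (x - P * (P * z)) * (P * P)^-1 by field. exact: nzl.
have d3 : y / P - z != 0.
  have -> : y / P - z = (y - P * z) * P^-1 by field. exact: nzl.
have d4 : P * y / P - P * z != 0.
  have -> : P * y / P - P * z = y - P * z by field. by rewrite subr_eq0.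
have d5 : P * y / P - x / P != 0.
  have -> : P * y / P - x / P = (x - P * y) * - P^-1 by field. exact: nzl.
have d6 : x / P - P * z != 0.
  have -> : x / P - P * z = (x - P * (P * z)) * P^-1 by field. exact: nzl.
have d7 : x / P / P - y / P != 0.
  have -> : x / P / P - y / P = (x - P * y) * (P * P)^-1 by field. exact: nzl.
have d8 : P * z / P - y / P != 0.
  have -> : P * z / P - y / P = (y - P * z) * - P^-1 by field. exact: nzl.
rewrite (@L12 _ _ _ hq hp _ _ _ _ d1) (@L13 _ _ _ hq hp _ _ _ _ d2) (@L13 _ _ _ hq hp _ _ _ _ d3).
rewrite (@L23 _ _ _ hq hp _ _ _ _ d4) (@L23 _ _ _ hq hp _ _ _ _ d5) (@L23 _ _ _ hq hp _ _ _ _ d6) (@L23 _ _ _ hq hp _ _ _ _ d1).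
rewrite (@L23 _ _ _ hq hp _ _ _ _ d3) (@L13 _ _ _ hq hp _ _ _ _ d6) (@L13 _ _ _ hq hp _ _ _ _ d1).
rewrite (@L12 _ _ _ hq hp _ _ _ _ d7) (@L12 _ _ _ hq hp _ _ _ _ d8) (@L12 _ _ _ hq hp _ _ _ _ d2) (@L12 _ _ _ hq hp _ _ _ _ d3).
rewrite -/P.
have e1 : P * y / P = y by field.
have e2 : P * (x / P) = x by field.
have e3 : P * (y / P) = y by field.
have e4 : P * z / P = z by field.
rewrite e1 e2 e3 e4.
move: (F3 w (x / P / P) y (P * (P * z))) (F3 w (x / P / P) (P * z) (P * y))
  (F3 w z y x) (F3 w z (x / P) (P * y)) (F3 w (y / P) (x / P) (P * (P * z)))
  (F3 w (y / P) (P * z) x) => f1 f2 f3 f4 f5 f6.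
have s1 : y + - z * P != 0 by rewrite mulNr subr_eq0 mulrC.
have s2 : x + - z * (P * P) != 0 by rewrite mulNr subr_eq0 mulrC -mulrA.
have s3 : x + - y * P != 0 by rewrite mulNr subr_eq0 mulrC.
have s4 : z * P - y != 0 by rewrite subr_eq0 eq_sym mulrC.
have s5 : y * P - x != 0 by rewrite subr_eq0 eq_sym mulrC.
field.
by rewrite hP s1 hq hp s2 s3 s4 s5.
Qed.

Lemma van1 n (c : 'I_n -> CC) (B : seq CC) :
  (forall x, x \notin B -> \sum_(a < n) c a * x ^+ a = 0) -> forall a, c a = 0.
Proof.
move=> H.
pose c' (i : nat) : CC := if insub i is Some a then c a else 0.
have c'E : forall a : 'I_n, c' a = c a by move=> a; rewrite /c' valK.
pose f := \poly_(i < n) c' i.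
have fE : forall x, f.[x] = \sum_(a < n) c a * x ^+ a.
  by move=> x; rewrite horner_poly; apply: eq_bigr => a _; rewrite c'E.
have f0 : f = 0.
  apply/eqP; apply/negPn/negP => hf.
  pose s := [seq m%:R | m <- iota 0 (n + size B)] : seq CC.
  pose rs := [seq r <- s | r \notin B].
  have us : uniq s.
    rewrite map_inj_uniq ?iota_uniq // => m1 m2 /eqP; rewrite eqr_nat => /eqP.
    done.
  have := max_poly_roots hf (rs := rs).
  have -> : all (root f) rs.
    apply/allP => r; rewrite mem_filter => /andP [hr _].
    by rewrite /root fE H.
  rewrite filter_uniq // => /(_ isT) hlt.
  have hsz := size_poly n c'.
  have hc : (count (mem B) s <= size B)%N.
    rewrite -size_filter; apply: uniq_leq_size; first exact: filter_uniq.
    by move=> r; rewrite mem_filter => /andP [].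
  have := count_predC (mem B) s.
  rewrite size_map size_iota.
  have -> : count (predC (mem B)) s = size rs by rewrite size_filter.
  move: (hlt isT) hsz hc; rewrite -/f; move: (size f) (size rs) (count (mem B) s) => A1 A2 A3; lia.
move=> a; rewrite -c'E.
have := coef_poly n c' a; rewrite -/f f0 coef0 ltn_ord => <-.
done.
Qed.

Lemma grid3 n (u : vec3 n) (B2 : CC -> seq CC) (B1 : CC -> CC -> seq CC) :
  (forall z y x, y \notin B2 z -> x \notin B1 y z -> F3 u x y z = 0) ->
  forall a b c, u a b c = 0.
Proof.
move=> H a b c.
have H1 : forall z y, y \notin B2 z -> forall a,
    \sum_(b < n) \sum_(c < n) u a b c * y ^+ b * z ^+ c = 0.
  move=> z y hy; apply: (@van1 _ _ (B1 y z)) => x hx.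
  rewrite -[RHS](H z y x hy hx) /F3; apply: eq_bigr => a' _.
  rewrite mulr_suml; apply: eq_bigr => b' _.
  rewrite mulr_suml; apply: eq_bigr => c' _; ring.
have H2 : forall z b, \sum_(c < n) u a b c * z ^+ c = 0.
  move=> z; apply: (@van1 _ _ (B2 z)) => y hy.
  rewrite -[RHS](H1 z y hy a); apply: eq_bigr => b' _.
  rewrite mulr_suml; apply: eq_bigr => c' _; ring.
by apply: (@van1 _ _ [::]) => z _; rewrite -[RHS](H2 z b); apply: eq_bigr => c' _; ring.
Qed.

Definition delta3 n (a b c : 'I_n) : vec3 n :=
  fun a0 b0 c0 => ((a0 == a) && (b0 == b) && (c0 == c))%:R.

Lemma app3_delta n (T : op3 n) a b c a' b' c' :
  app3 T (delta3 a b c) a' b' c' = T a b c a' b' c'.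
Proof.
rewrite /app3 /delta3 (@collapse n a); last first.
  move=> a0 ha; apply: big1 => b0 _; apply: big1 => c0 _.
  by rewrite (negbTE ha) mul0r.
rewrite (@collapse n b); last first.
  move=> b0 hb; apply: big1 => c0 _.
  by rewrite (negbTE hb) andbF mul0r.
rewrite (@collapse n c); last first.
  by move=> c0 hc; rewrite (negbTE hc) andbF mul0r.
by rewrite !eqxx mul1r.
Qed.

Lemma F3_sub n (u v : vec3 n) x y z :
  F3 (fun a b c => u a b c - v a b c) x y z = F3 u x y z - F3 v x y z.
Proof.
rewrite /F3 !triple -sumrB; apply: eq_bigr => t _; ring.
Qed.

Lemma YBE n (q p : CC) : q != 0 -> p != 0 ->
  forall a b c a' b' c' : 'I_n,
     comp3 (leg12 (CG_R q p)) (comp3 (leg13 (CG_R q p)) (leg23 (CG_R q p)))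
       a b c a' b' c'
     = comp3 (leg23 (CG_R q p)) (comp3 (leg13 (CG_R q p)) (leg12 (CG_R q p)))
       a b c a' b' c'.
Proof.
move=> hq hp a b c a' b' c'.
apply/eqP; rewrite -subr_eq0; apply/eqP.
rewrite -!(app3_delta _ a b c).
move: a' b' c'.
apply: (grid3 (B2 := fun z => [:: p ^+ 2 * z]) (B1 := fun y z => [:: p ^+ 2 * y; p ^+ 2 * (p ^+ 2 * z)])).
move=> z y x; rewrite !inE negb_or => h3 /andP [h1 h2].
rewrite F3_sub YBE_F //; exact: subrr.
Qed.

Definition vec2 n := 'I_n -> 'I_n -> CC.
Definition F2 n (w : vec2 n) (x y : CC) : CC :=
  \sum_(a < n) \sum_(b < n) w a b * x ^+ a * y ^+ b.
Definition app2 n (T : op2 n) (w : vec2 n) : vec2 n := fun a' b' =>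
  \sum_(a < n) \sum_(b < n) w a b * T a b a' b'.

Lemma double n (f : 'I_n -> 'I_n -> CC) :
  \sum_(a < n) \sum_(b < n) f a b = \sum_(t : 'I_n * 'I_n) f t.1 t.2.
Proof. by rewrite pair_bigA. Qed.

Lemma app2_comp n (A B : op2 n) (w : vec2 n) a' b' :
  app2 (comp2 A B) w a' b' = app2 A (app2 B w) a' b'.
Proof.
rewrite /app2 /comp2 !double.
under eq_bigr do rewrite double mulr_sumr.
rewrite exchange_big; apply: eq_bigr => t _.
rewrite double mulr_suml; apply: eq_bigr => u _ /=; ring.
Qed.

Lemma F2_ext n (u v : vec2 n) x y : (forall a b, u a b = v a b) ->
  F2 u x y = F2 v x y.
Proof.
by move=> h; rewrite /F2; apply: eq_bigr => a _; apply: eq_bigr => b _; rewrite h.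
Qed.

Lemma F2_app n (T : op2 n) (w : vec2 n) x y :
  F2 (app2 T w) x y = \sum_(a < n) \sum_(b < n) w a b * rho T a b x y.
Proof.
rewrite /F2 /app2 /rho !double.
under eq_bigr do rewrite double !mulr_suml.
rewrite exchange_big; apply: eq_bigr => t _.
rewrite double mulr_sumr; apply: eq_bigr => u _; ring.
Qed.

Lemma F2_lin n (u v : vec2 n) (c : CC) x y :
  F2 (fun a b => u a b + c * v a b) x y = F2 u x y + c * F2 v x y.
Proof.
rewrite /F2 !double mulr_sumr -big_split; apply: eq_bigr => t _ /=; ring.
Qed.

Lemma F2_scale n (u : vec2 n) (c : CC) x y :
  F2 (fun a b => c * u a b) x y = c * F2 u x y.
Proof.
rewrite /F2 !double mulr_sumr; apply: eq_bigr => t _ /=; ring.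
Qed.

Lemma F2_swap n (w : vec2 n) x y :
  F2 (fun a b => w b a) x y = F2 w y x.
Proof.
rewrite /F2 exchange_big; apply: eq_bigr => a _; apply: eq_bigr => b _; ring.
Qed.

Lemma app2_flip n (w : vec2 n) a' b' : app2 (@flip n) w a' b' = w b' a'.
Proof.
rewrite /app2 /flip (@collapse n b'); last first.
  move=> a ha; apply: big1 => b _.
  have -> : (b' == a) = false by rewrite eq_sym; exact: negbTE.
  by rewrite andbF mulr0.
rewrite (@collapse n a'); last first.
  move=> b hb; have -> : (a' == b) = false by rewrite eq_sym; exact: negbTE.
  by rewrite mulr0.
by rewrite !eqxx mulr1.
Qed.

Section Hecke.
Variables (n : nat) (q p : CC) (hq : q != 0) (hp : p != 0).
Local Notation P := (p ^+ 2).
Local Notation h := (q - q^-1).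
Local Notation R := (CG_R q p).

Lemma F2_R (w : vec2 n) x y : x / P - y != 0 ->
  F2 (app2 R w) x y =
  p^-1 * (q * F2 w (x / P) (P * y) + h * y / (x / P - y) * (F2 w (x / P) (P * y) - F2 w y x)).
Proof.
move=> hD; rewrite F2_app /F2 !double.
rewrite -sumrB !mulr_sumr -big_split mulr_sumr; apply: eq_bigr => t _ /=.
rewrite rho_solved //.
move: (x / P - y) hD => D hD; field.
by rewrite hD hq hp.
Qed.

Lemma F2_Rc (w : vec2 n) x y : x / P - y != 0 ->
  F2 (app2 (CG_Rcheck q p) w) x y =
  q * F2 w (P * y) (x / P) + h * y / (x / P - y) * (F2 w (P * y) (x / P) - F2 w x y).
Proof.
move=> hD.
have E : forall a b, app2 (CG_Rcheck q p) w a b = p * app2 R (app2 (@flip n) w) a b.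
  move=> a b; rewrite -app2_comp /app2 /CG_Rcheck /scale2 mulr_sumr.
  apply: eq_bigr => a0 _; rewrite mulr_sumr; apply: eq_bigr => b0 _; ring.
have Fl : forall u v, F2 (app2 (@flip n) w) u v = F2 w v u.
  by move=> u v; rewrite -F2_swap; apply: F2_ext => a b; rewrite app2_flip.
rewrite (F2_ext _ _ E) F2_scale F2_R // !Fl.
move: (x / P - y) hD => D hD; field.
by rewrite hD hq hp.
Qed.

Lemma app2_addscale (c : CC) (u : vec2 n) a b :
  app2 (add2 (CG_Rcheck q p) (scale2 c (@id2 n))) u a b =
  app2 (CG_Rcheck q p) u a b + c * u a b.
Proof.
rewrite /app2 /add2 /scale2 /id2.
have -> : \sum_(a0 < n) \sum_(b0 < n) u a0 b0 * (CG_Rcheck q p a0 b0 a b + c * ((a0 == a) && (b0 == b))%:R)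
  = \sum_(a0 < n) \sum_(b0 < n) u a0 b0 * CG_Rcheck q p a0 b0 a b +
    c * \sum_(a0 < n) \sum_(b0 < n) u a0 b0 * ((a0 == a) && (b0 == b))%:R.
  by rewrite !double mulr_sumr -big_split; apply: eq_bigr => t _ /=; ring.
congr (_ + c * _).
rewrite (@collapse n a); last first.
  by move=> a0 ha; apply: big1 => b0 _; rewrite (negbTE ha) mulr0.
rewrite (@collapse n b); last first.
  by move=> b0 hb; rewrite (negbTE hb) andbF mulr0.
by rewrite !eqxx mulr1.
Qed.

Lemma Hecke_F (w : vec2 n) x y : x != P * y ->
  F2 (app2 (comp2 (add2 (CG_Rcheck q p) (scale2 (- q) (@id2 n)))
           (add2 (CG_Rcheck q p) (scale2 q^-1 (@id2 n)))) w) x y = 0.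
Proof.
move=> h1.
have hP : P != 0 by rewrite expf_neq0.
rewrite (F2_ext _ _ (app2_comp _ _ w)).
rewrite (F2_ext _ _ (app2_addscale _ _)) F2_lin.
set v := app2 _ w.
have Fv : forall u t, F2 v u t = F2 (app2 (CG_Rcheck q p) w) u t + q^-1 * F2 w u t.
  by move=> u t; rewrite -F2_lin; apply: F2_ext => a b; rewrite /v app2_addscale.
have d1 : x / P - y != 0.
  have -> : x / P - y = (x - P * y) * P^-1 by field.
  by apply: nzl; rewrite // invr_eq0.
have d5 : P * y / P - x / P != 0.
  have -> : P * y / P - x / P = (x - P * y) * - P^-1 by field.
  by apply: nzl; rewrite // oppr_eq0 invr_eq0.
rewrite F2_Rc // !Fv F2_Rc // F2_Rc //.
have e1 : P * y / P = y by field.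
have e2 : P * (x / P) = x by field.
rewrite e1 e2.
move: (F2 w x y) (F2 w (P * y) (x / P)) => f1 f2.
have s1 : y * P - x != 0 by rewrite subr_eq0 eq_sym mulrC.
have s3 : x + - y * P != 0 by rewrite mulNr subr_eq0 mulrC.
field.
by rewrite hq hp s3 s1.
Qed.
End Hecke.

Lemma grid2 n (u : vec2 n) (B : CC -> seq CC) :
  (forall y x, x \notin B y -> F2 u x y = 0) -> forall a b, u a b = 0.
Proof.
move=> H a b.
have H1 : forall y a, \sum_(b < n) u a b * y ^+ b = 0.
  move=> y; apply: (@van1 _ _ (B y)) => x hx.
  rewrite -[RHS](H y x hx) /F2; apply: eq_bigr => a' _.
  rewrite mulr_suml; apply: eq_bigr => b' _; ring.
by apply: (@van1 _ _ [::]) => y _; rewrite -[RHS](H1 y a); apply: eq_bigr => b' _; ring.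
Qed.

Definition delta2 n (i j : 'I_n) : vec2 n := fun a b => ((a == i) && (b == j))%:R.

Lemma app2_delta n (T : op2 n) i j k l : app2 T (delta2 i j) k l = T i j k l.
Proof.
rewrite /app2 /delta2 (@collapse n i); last first.
  by move=> a ha; apply: big1 => b _; rewrite (negbTE ha) mul0r.
rewrite (@collapse n j); last first.
  by move=> b hb; rewrite (negbTE hb) andbF mul0r.
by rewrite !eqxx mul1r.
Qed.

Theorem mainTheorem7 (n : nat) (q p : CC) (hn : (1 <= n)%N)
    (hq : q != 0) (hp : p != 0) :
  (forall a b c a' b' c' : 'I_n,
     comp3 (leg12 (CG_R q p)) (comp3 (leg13 (CG_R q p)) (leg23 (CG_R q p)))
       a b c a' b' c'
     = comp3 (leg23 (CG_R q p)) (comp3 (leg13 (CG_R q p)) (leg12 (CG_R q p)))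
       a b c a' b' c')
  /\
  (forall i j k l : 'I_n,
     comp2 (add2 (CG_Rcheck q p) (scale2 (- q) (@id2 n)))
           (add2 (CG_Rcheck q p) (scale2 q^-1 (@id2 n))) i j k l = 0).
Proof.
split; first exact: YBE.
move=> i j k l; rewrite -(app2_delta _ i j).
move: k l; apply: (grid2 (B := fun y => [:: p ^+ 2 * y])) => y x.
rewrite !inE => h1.
exact: Hecke_F.
Qed.
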